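(* Let $\mu,\nu$ be finite Borel measures in metric spaces $X$ and $Y$ respectively, and let $\mu\times\nu$ be the product measure on $X\times Y$ (with the maximum metric). Then (i) $\dim_{\mathrm P}(\mu\times\nu)\ge\dim_{\mathrm P}\mu+\underline{\dim}_{\mathrm P}\nu$; (ii) $\underline{\dim}_{\mathrm P}(\mu\times\nu)\ge\underline{\dim}_{\mathrm P}\mu+\underline{\dim}_{\mathrm P}\nu$.
   Context: For a subset $E$ of a metric space, $N_\delta(E)$ is the minimal cardinality of a cover of $E$ by sets of diameter at most $\delta$; $\underline{\dim}_{\mathrm B}E=\liminf_{\delta\to0}\frac{\log N_\delta(E)}{|\log\delta|}$, $\overline{\dim}_{\mathrm B}E=\limsup_{\delta\to0}\frac{\log N_\delta(E)}{|\log\delta|}$; $\dim_{\mathrm P}E=\inf\{\sup_n\overline{\dim}_{\mathrm B}E_n:E\subseteq\bigcup_nE_n\}$ and $\underline{\dim}_{\mathrm P}E=\inf\{\sup_n\underline{\dim}_{\mathrm B}E_n:E\subseteq\bigcup_nE_n\}$ (countable covers). For a finite Borel measure $\mu$ on a metric space $X$ and $\dim$ either of these dimensions, $\dim\mu=\inf\{\dim E: E\subseteq X\text{ Borel},\ \mu(E)>0\}$. *)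

(* Defs.v *)
From HB Require Import structures.
From mathcomp Require Import all_boot all_order all_algebra.
From mathcomp Require Import all_classical all_reals all_analysis.
Set Implicit Arguments. Unset Strict Implicit. Unset Printing Implicit Defensive.
Import Order.TTheory GRing.Theory Num.Theory.
Import numFieldNormedType.Exports.
Local Open Scope classical_set_scope.
Local Open Scope ring_scope.

Section MetricDims.
Context {R : realType}.

Definition is_metric (T : Type) (dist : T -> T -> R) : Prop :=
  [/\ (forall x y, 0 <= dist x y),
      (forall x y, dist x y = 0 <-> x = y),
      (forall x y, dist x y = dist y x) &
      (forall x y z, dist x z <= dist x y + dist y z)].

Definition metric_open (T : Type) (dist : T -> T -> R) : set (set T) :=
  [set U | forall x, U x -> exists2 r : R, 0 < r & [set y | dist x y < r] `<=` U].

Definition metric_borel (T : Type) (dist : T -> T -> R) : set (set T) :=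
  <<s metric_open dist >>.

Definition max_dist (T U : Type) (dT : T -> T -> R) (dU : U -> U -> R)
  : T * U -> T * U -> R :=
  fun p q => Num.max (dT p.1 q.1) (dU p.2 q.2).

(** Diameter (in extended reals; the empty set has diameter -oo). *)
Definition diam (T : Type) (dist : T -> T -> R) (E : set T) : \bar R :=
  ereal_sup [set (dist x y)%:E | x in E & y in E].

(** N_delta(E): minimal number of sets of diameter <= delta covering E
    (+oo if there is no finite such cover). *)
Definition covering_number (T : Type) (dist : T -> T -> R) (delta : R) (E : set T)
  : \bar R :=
  ereal_inf [set (n%:R)%:E | n in [set n : nat | exists F : nat -> set T,
     (forall i, (i < n)%N -> (diam dist (F i) <= delta%:E)%E) /\
     E `<=` \bigcup_(i in [set i : nat | (i < n)%N]) F i]].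

Definition elog (x : \bar R) : \bar R :=
  match x with
  | EFin x' => if (0 < x')%R then EFin (ln x') else -oo
  | +oo => +oo
  | -oo => -oo
  end%E.

Definition box_ratio (T : Type) (dist : T -> T -> R) (E : set T) (delta : R)
  : \bar R :=
  (elog (covering_number dist delta E) * ((`|ln delta|)^-1)%:E)%E.

Definition lower_box_dim (T : Type) (dist : T -> T -> R) (E : set T) : \bar R :=
  limf_einf (box_ratio dist E) (0^'+).

Definition upper_box_dim (T : Type) (dist : T -> T -> R) (E : set T) : \bar R :=
  limf_esup (box_ratio dist E) (0^'+).

Definition packing_dim (T : Type) (dist : T -> T -> R) (E : set T) : \bar R :=
  ereal_inf [set ereal_sup (range (fun n => upper_box_dim dist (F n)))
            | F in [set F : nat -> set T | E `<=` \bigcup_n F n]].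

Definition lower_packing_dim (T : Type) (dist : T -> T -> R) (E : set T) : \bar R :=
  ereal_inf [set ereal_sup (range (fun n => lower_box_dim dist (F n)))
            | F in [set F : nat -> set T | E `<=` \bigcup_n F n]].

Definition measure_dim (d : measure_display) (T : measurableType d)
  (dim : set T -> \bar R) (mu : set T -> \bar R) : \bar R :=
  ereal_inf [set dim E | E in [set E : set T | measurable E /\ (0 < mu E)%E]].

End MetricDims.

(* Main.v *)
Require Import Defs.
From HB Require Import structures.
From mathcomp Require Import all_boot all_order all_algebra.
From mathcomp Require Import all_classical all_reals all_analysis.
From mathcomp Require Import ring lra.
Import Order.TTheory GRing.Theory Num.Theory.
Local Open Scope classical_set_scope.
Local Open Scope ring_scope.

Module Helpers.
Import numFieldNormedType.Exports.
Local Open Scope classical_set_scope.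
Local Open Scope ring_scope.
Set Implicit Arguments. Unset Strict Implicit. Unset Printing Implicit Defensive.


Section Cov.
Context {R : realType}.

Definition cov {T : Type} (dist : T -> T -> R) (delta : R) (E : set T) (n : nat) : Prop :=
  exists F : nat -> set T,
     (forall i, (i < n)%N -> (diam dist (F i) <= delta%:E)%E) /\
     E `<=` \bigcup_(i in [set i : nat | (i < n)%N]) F i.

Definition LB {T : Type} (dist : T -> T -> R) (delta : R) (E : set T) (k : nat) : Prop :=
  forall n, cov dist delta E n -> (k <= n)%N.

Lemma sup_ub (S : set \bar R) y : S y -> (y <= ereal_sup S)%E.
Proof. exact: ereal_sup_ubound. Qed.
Lemma inf_lb (S : set \bar R) y : S y -> (ereal_inf S <= y)%E.
Proof. exact: ereal_inf_lbound. Qed.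
Lemma lb_inf (S : set \bar R) x : (forall y, S y -> (x <= y)%E) -> (x <= ereal_inf S)%E.
Proof. by move=> h; apply/ereal_infP. Qed.
Lemma ub_sup (S : set \bar R) x : (forall y, S y -> (y <= x)%E) -> (ereal_sup S <= x)%E.
Proof. by move=> h; apply/ereal_supP. Qed.

Definition k0 (c delta : R) : nat := (Num.trunc (expR (c * `|ln delta|))).+1.

Lemma diam_leP {T : Type} (dist : T -> T -> R) (F : set T) (delta : R) :
  (diam dist F <= delta%:E)%E <-> (forall x y, F x -> F y -> dist x y <= delta).
Proof.
split.
- move=> h x y Fx Fy; rewrite -lee_fin; apply: le_trans h.
  by apply: sup_ub; exists x => //; exists y.
- move=> h; apply: ub_sup => _ [x Fx [y Fy <-]]; rewrite lee_fin; exact: h.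
Qed.

Lemma covering_number_lb {T : Type} (dist : T -> T -> R) delta (E : set T) k :
  LB dist delta E k -> ((k%:R)%:E <= covering_number dist delta E)%E.
Proof.
move=> h; apply: lb_inf => _ [n cn <-]; rewrite lee_fin ler_nat; exact: h.
Qed.

Lemma covering_number_ub {T : Type} (dist : T -> T -> R) delta (E : set T) n :
  cov dist delta E n -> (covering_number dist delta E <= (n%:R)%:E)%E.
Proof. by move=> h; apply: inf_lb; exists n. Qed.

Lemma k0_gt (c delta : R) : c * `|ln delta| < ln ((k0 c delta)%:R).
Proof.
rewrite -[X in X < _]expRK ltr_ln ?posrE ?expR_gt0 //.
  exact: truncnS_gt.
Qed.

Lemma LB_ratio {T : Type} (dist : T -> T -> R) delta (E : set T) k c :
  0 < delta < 1 -> LB dist delta E k -> (0 < k)%N -> c * `|ln delta| < ln (k%:R) ->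
  (c%:E < box_ratio dist E delta)%E.
Proof.
move=> /andP[d0 d1] hLB kpos hk.
have lnd : 0 < `|ln delta|.
  by rewrite normr_gt0 lt_eqF // ln_lt0 // d0 d1.
have hN : ((k%:R)%:E <= covering_number dist delta E)%E.
  exact: covering_number_lb.
rewrite /box_ratio.
case: (covering_number dist delta E) hN => [r| |] //= hN.
- rewrite lee_fin in hN.
  have r0 : 0 < r by apply: lt_le_trans hN; rewrite ltr0n.
  rewrite r0 -EFinM lte_fin ltr_pdivlMr //.
  apply: (lt_le_trans hk).
  by rewrite ler_ln ?posrE ?ltr0n.
- by rewrite gt0_mulye ?lte_fin ?invr_gt0 // ltry.
Qed.

Lemma ratio_LB {T : Type} (dist : T -> T -> R) delta (E : set T) c :
  0 < delta < 1 -> (c%:E < box_ratio dist E delta)%E ->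
  LB dist delta E (k0 c delta).
Proof.
move=> /andP[d0 d1] hr n cn.
have lnd : 0 < `|ln delta|.
  by rewrite normr_gt0 lt_eqF // ln_lt0 // d0 d1.
rewrite leqNgt; apply/negP => lt.
have hn : n%:R <= expR (c * `|ln delta|).
  by rewrite -truncn_ge_nat ?expR_ge0 // -ltnS.
have := covering_number_ub (cn : cov dist delta E n).
move: hr; rewrite /box_ratio.
case: (covering_number dist delta E) => [r| |] //= hr hN.
- rewrite lee_fin in hN.
  move: hr; case: ifPn => r0; last by rewrite gt0_mulNye ?lte_fin ?invr_gt0.
  rewrite -EFinM lte_fin ltr_pdivlMr // => hr.
  have n0 : 0 < (n%:R : R) by apply: lt_le_trans hN.
  have : ln r <= c * `|ln delta|.
    rewrite -[X in _ <= X]expRK; rewrite ler_ln ?posrE ?expR_gt0 //.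
    exact: le_trans hN hn.
  by rewrite leNgt hr.
- by move: hr; rewrite mulNyr gtr0_sg ?invr_gt0 // mul1e.
Qed.
End Cov.


Lemma count_sum (T : Type) (a : pred T) (s : seq T) :
  count a s = (\sum_(j <- s) a j)%N.
Proof. by elim: s => [|x s IH]; rewrite ?big_nil ?big_cons //= IH. Qed.

Lemma sum_le1 (b : nat -> bool) m :
  (forall i i', (i < m)%N -> (i' < m)%N -> b i -> b i' -> i = i') ->
  (\sum_(0 <= i < m) b i <= 1)%N.
Proof.
elim: m => [|m IH] h; first by rewrite big_geq.
rewrite big_nat_recr //=.
case bm: (b m).
- rewrite big_nat_cond big1 // => i /andP[/andP[_ im] _].
  case bi: (b i) => //.
  by have := h i m (ltnW (leq_trans im (leqnn _))) (ltnSn _) bi bm => eq; rewrite eq ltnn in im.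
- rewrite addn0; apply: IH => i i' hi hi'; apply: h; exact: ltnW.
Qed.

Section Sep.
Context {R : realType}.

Definition sep {X : Type} (dX : X -> X -> R) (delta : R) (f : nat -> X) (m : nat) :=
  forall i j, (i < m)%N -> (j < m)%N -> i <> j -> delta < dX (f i) (f j).

Definition sec {X Y : Type} (F : set (X * Y)) (x : X) : set Y := [set y | F (x, y)].

Lemma exists_sep {X : Type} (x0 : X) (dX : X -> X -> R) (hX : is_metric dX)
  delta (G : set X) m :
  LB dX (delta + delta) G m ->
  exists f, (forall i, (i < m)%N -> G (f i)) /\ sep dX delta f m.
Proof.
case: hX => d0 _ dsym dtri hLB.
suff: forall m', (m' <= m)%N ->
  exists f, (forall i, (i < m')%N -> G (f i)) /\ sep dX delta f m'.
  by apply.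
elim=> [|m' IH] hm.
  by exists (fun=> x0); split => // i j.
have [f [Gf sf]] := IH (ltnW hm).
have : ~ (G `<=` \bigcup_(i in [set i : nat | (i < m')%N]) [set z | dX (f i) z <= delta]).
  move=> hc.
  have : (m <= m')%N.
    apply: hLB; exists (fun i => [set z | dX (f i) z <= delta]); split => // i _.
    apply/diam_leP => x y /= hx hy.
    apply: (le_trans (dtri x (f i) y)); rewrite dsym; exact: lerD.
  by rewrite leqNgt hm.
move=> /existsNP[z] /not_implyP[Gz nz].
have nz' : forall i, (i < m')%N -> delta < dX (f i) z.
  move=> i im; rewrite ltNge; apply/negP => le; apply: nz; exists i => //.
exists (fun i => if i == m' then z else f i); split.
  move=> i; rewrite ltnS leq_eqVlt; case: eqP => [-> //|_ /= h]; exact: Gf.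
move=> i j hi hj ij.
have hi' : i = m' \/ (i < m')%N by move: hi; rewrite ltnS leq_eqVlt => /orP[/eqP|]; auto.
have hj' : j = m' \/ (j < m')%N by move: hj; rewrite ltnS leq_eqVlt => /orP[/eqP|]; auto.
case: hi' => [ei|im]; case: hj' => [ej|jm].
- by exfalso; apply: ij; rewrite ei ej.
- rewrite ei eqxx (_ : (j == m') = false); last by apply/eqP => e; rewrite e ltnn in jm.
  by rewrite dsym; exact: nz'.
- rewrite ej eqxx (_ : (i == m') = false); last by apply/eqP => e; rewrite e ltnn in im.
  exact: nz'.
- rewrite (_ : (j == m') = false); last by apply/eqP => e; rewrite e ltnn in jm.
  rewrite (_ : (i == m') = false); last by apply/eqP => e; rewrite e ltnn in im.
  exact: sf.
Qed.

Lemma prod_LB {X Y : Type} (dX : X -> X -> R) (dY : Y -> Y -> R)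
  delta (F : set (X * Y)) (f : nat -> X) m k :
  sep dX delta f m ->
  (forall i, (i < m)%N -> LB dY delta (sec F (f i)) k) ->
  LB (max_dist dX dY) delta F (m * k).
Proof.
move=> hs hL n [G [hG hcov]].
pose meets i j : bool := `[< exists y, G j (f i, y) >].
have hc : forall i, (i < m)%N -> (k <= \sum_(0 <= j < n) meets i j)%N.
  move=> i im; apply: (hL i im).
  pose s := seq.filter (meets i) (iota 0 n).
  have -> : (\sum_(0 <= j < n) meets i j)%N = size s.
    by rewrite size_filter count_sum /index_iota subn0.
  exists (fun l => [set y | G (nth 0%N s l) (f i, y)]); split.
    move=> l ls; apply/diam_leP => y y' /= hy hy'.
    have hl : (nth 0%N s l < n)%N.
      have := mem_nth 0%N ls; rewrite mem_filter mem_iota => /andP[_]; by rewrite add0n.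
    have /diam_leP hd := hG _ hl.
    have := hd _ _ hy hy'.
    by rewrite /max_dist /=; apply: le_trans; rewrite le_max lexx orbT.
  move=> y /= Fy; have [j /= jn Gj] := hcov _ Fy.
  have js : j \in s.
    rewrite mem_filter mem_iota add0n jn leq0n !andbT; apply/asboolP; by exists y.
  by exists (index j s); [rewrite /= index_mem | rewrite nth_index].
have hsum : (\sum_(0 <= i < m) \sum_(0 <= j < n) meets i j <= n)%N.
  rewrite exchange_big_nat.
  apply: (@leq_trans (\sum_(0 <= j < n) 1)%N); last by rewrite sum_nat_const_nat subn0 muln1.
  rewrite big_nat_cond [X in (_ <= X)%N]big_nat_cond.
  apply: leq_sum => j /andP[/andP[_ jn] _]; apply: sum_le1 => i i' im im' /asboolP[y hy] /asboolP[y' hy'].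
  apply/eqP; apply/negP => /negP/eqP ii'.
  have := hs i i' im im' ii'.
  have /diam_leP h := hG j jn.
  have := h _ _ hy hy'; rewrite /max_dist /= => hle hlt.
  have hm : dX (f i) (f i') <= Num.max (dX (f i) (f i')) (dY y y') by rewrite le_max lexx.
  have := lt_le_trans hlt (le_trans hm hle).
  by rewrite ltxx.
have -> : (m * k = \sum_(0 <= i < m) k)%N by rewrite sum_nat_const_nat subn0.
apply: leq_trans hsum.
rewrite big_nat_cond [X in (_ <= X)%N]big_nat_cond.
by apply: leq_sum => i /andP[/andP[_ im] _]; apply: hc.
Qed.
End Sep.


Section Lims.
Context {R : realType}.
Implicit Types (f : R -> \bar R) (c : R).

Lemma near_itv (eta : R) : 0 < eta -> (0^'+) [set x : R | (0 < x < eta)%R].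
Proof.
move=> e0; near=> x; apply/andP; split; near: x.
  exact: nbhs_right_gt.
exact: nbhs_right_lt.
Unshelve. all: by end_near.
Qed.

Lemma near_get (V : set R) : (0^'+) V ->
  exists2 e : R, 0 < e & forall x, 0 < x < e -> V x.
Proof.
move=> /nbhs_ballP[e /= e0 he]; exists e => // x /andP[x0 xe].
apply: he => //=; rewrite /ball /= sub0r normrN gtr0_norm //.
Qed.

Lemma esup_gt f c : (c%:E < limf_esup f (0^'+))%E ->
  forall eta, 0 < eta -> exists d, 0 < d < eta /\ (c%:E < f d)%E.
Proof.
move=> h eta e0.
have hV := near_itv e0.
have : (c%:E < ereal_sup (f @` [set x : R | (0 < x < eta)%R]))%E.
  apply: (lt_le_trans h); rewrite limf_esupE; apply: inf_lb; by exists [set x : R | (0 < x < eta)%R].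
by move=> /ereal_sup_gt[_ [d hd <-] hc]; exists d.
Qed.

Lemma esup_ge f c :
  (forall eta, 0 < eta -> exists d, 0 < d < eta /\ (c%:E < f d)%E) ->
  (c%:E <= limf_esup f (0^'+))%E.
Proof.
move=> h; rewrite limf_esupE; apply: lb_inf => _ [V hV <-].
have [e e0 he] := near_get hV.
have [d [hd hc]] := h e e0.
apply: le_ereal_sup_tmp; exists (f d); last exact: ltW.
by exists d => //; apply: he.
Qed.

Lemma einf_gt f c : (c%:E < limf_einf f (0^'+))%E ->
  exists2 eta, 0 < eta & forall d, 0 < d < eta -> (c%:E < f d)%E.
Proof.
rewrite limf_einfE => /ereal_sup_gt[_ [V hV <-] hc].
have [e e0 he] := near_get hV.
exists e => // d hd; apply: (lt_le_trans hc); apply: inf_lb; exists d => //.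
exact: he.
Qed.

Lemma einf_ge f c :
  (exists2 eta, 0 < eta & forall d, 0 < d < eta -> (c%:E < f d)%E) ->
  (c%:E <= limf_einf f (0^'+))%E.
Proof.
move=> [eta e0 h]; rewrite limf_einfE.
apply: le_ereal_sup_tmp; exists (ereal_inf (f @` [set x : R | (0 < x < eta)%R])).
  by exists [set x : R | (0 < x < eta)%R] => //; exact: near_itv.
apply: lb_inf => _ [d hd <-]; exact/ltW/h.
Qed.

End Lims.


Section Arith.
Context {R : realType}.

Lemma thresh (s s1 : R) : s < s1 -> exists2 eta : R, 0 < eta &
  forall d, 0 < d < eta -> d + d < 1 /\ s * `|ln d| <= s1 * `|ln (d + d)|.
Proof.
move=> ss1.
pose L := `|s1| * ln 2 / (s1 - s).
exists (Num.min (2^-1) (expR (- L))).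
  by rewrite lt_min invr_gt0 ltr0n expR_gt0.
move=> d /andP[d0]; rewrite lt_min => /andP[d2 dL].
have dd1 : d + d < 1.
  have : d * 2 < 2^-1 * 2 by rewrite ltr_pM2r.
  rewrite mulVf ?pnatr_eq0 //; lra.
split => //.
have d1 : d < 1 by lra.
have lnd : ln d < - L by rewrite -[X in _ < X]expRK ltr_ln ?posrE ?expR_gt0.
have lndd : ln (d + d) = ln 2 + ln d.
  by rewrite -lnM ?posrE ?ltr0n //; congr ln; lra.
have ln2 : 0 <= ln (2 : R) by rewrite ln_ge0 // ler1n.
have lnd0 : ln d < 0 by rewrite ln_lt0 // d0 d1.
have lndd0 : ln (d + d) < 0 by rewrite ln_lt0 // dd1 andbT; lra.
rewrite !ltr0_norm //.
have hL : (s1 - s) * L = `|s1| * ln 2.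
  rewrite /L; field; rewrite subr_eq0 gt_eqF //.
have h1 : (s1 - s) * L <= (s1 - s) * (- ln d).
  by rewrite ler_pM2l ?subr_gt0 // ltW // ltrNr.
have h2 : s1 * ln 2 <= `|s1| * ln 2 by rewrite ler_wpM2r // ler_norm.
rewrite lndd; nra.
Qed.

Lemma final_arith (s s1 t d : R) : 0 < d -> d + d < 1 ->
  s * `|ln d| <= s1 * `|ln (d + d)| ->
  (s + t) * `|ln d| < ln (((k0 s1 (d + d) * k0 t d)%N)%:R).
Proof.
move=> d0 dd1 h.
rewrite natrM lnM ?posrE ?ltr0n //.
have := k0_gt s1 (d + d); have := k0_gt t d; lra.
Qed.

End Arith.

Section Step3.
Context {R : realType} {X Y : Type} (x0 : X) (dX : X -> X -> R) (dY : Y -> Y -> R)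
  (hX : is_metric dX).

Lemma core (F : set (X * Y)) (G : set X) t d K :
  0 < d -> d + d < 1 ->
  (forall x, G x -> (t%:E < box_ratio dY (sec F x) d)%E) ->
  LB dX (d + d) G K -> LB (max_dist dX dY) d F (K * k0 t d).
Proof.
move=> d0 dd1 hG hLB.
have [f [Gf sf]] := exists_sep x0 hX hLB.
apply: prod_LB sf _ => i im.
apply: ratio_LB; last exact: hG (Gf i im).
apply/andP; split => //; lra.
Qed.

Lemma chain (F : set (X * Y)) (G : set X) s s1 t d :
  0 < d -> d + d < 1 -> s * `|ln d| <= s1 * `|ln (d + d)| ->
  (forall x, G x -> (t%:E < box_ratio dY (sec F x) d)%E) ->
  (s1%:E < box_ratio dX G (d + d))%E ->
  ((s + t)%:E < box_ratio (max_dist dX dY) F d)%E.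
Proof.
move=> d0 dd1 hs hG hr.
have dd : 0 < d + d < 1 by apply/andP; split => //; lra.
have hLB := ratio_LB dd hr.
have hF := core d0 dd1 hG hLB.
apply: (LB_ratio _ hF).
- apply/andP; split => //; lra.
- by rewrite muln_gt0.
- exact: final_arith.
Qed.

Lemma step3_up (F : set (X * Y)) (G : set X) s s1 t (k : nat) :
  s < s1 -> (s1%:E < upper_box_dim dX G)%E ->
  (forall x, G x -> forall d, 0 < d -> d < (k.+1%:R)^-1 ->
     (t%:E < box_ratio dY (sec F x) d)%E) ->
  ((s + t)%:E <= upper_box_dim (max_dist dX dY) F)%E.
Proof.
move=> ss1 hG hS; apply: esup_ge => eta eta0.
have [eta1 eta10 h1] := thresh ss1.
pose e := Num.min (Num.min eta eta1) (k.+1%:R)^-1.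
have e0 : 0 < e by rewrite !lt_min eta0 eta10 invr_gt0 ltr0n.
have [eps [/andP[eps0 epse] hr]] := esup_gt hG e0.
pose d := eps / 2.
have epsd : eps = d + d by rewrite /d; field.
have d0 : 0 < d by rewrite /d divr_gt0.
have de : d < e by rewrite (lt_le_trans _ (ltW epse)) // epsd; lra.
move: de; rewrite !lt_min => /andP[/andP[deta deta1] dk].
have [dd1 hs] := h1 d (introT andP (conj d0 deta1)).
exists d; split; first by rewrite d0.
apply: (chain (G := G) (s1 := s1)) => //.
- by move=> x Gx; exact: hS x Gx d d0 dk.
- by move: hr; rewrite epsd.
Qed.

Lemma step3_low (F : set (X * Y)) (G : set X) s s1 t (k : nat) :
  s < s1 -> (s1%:E < lower_box_dim dX G)%E ->
  (forall x, G x -> forall d, 0 < d -> d < (k.+1%:R)^-1 ->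
     (t%:E < box_ratio dY (sec F x) d)%E) ->
  ((s + t)%:E <= lower_box_dim (max_dist dX dY) F)%E.
Proof.
move=> ss1 hG hS; apply: einf_ge.
have [eta0 eta00 h0] := einf_gt hG.
have [eta1 eta10 h1] := thresh ss1.
pose e := Num.min (Num.min (eta0 / 2) eta1) (k.+1%:R)^-1.
have e0 : 0 < e by rewrite !lt_min divr_gt0 // eta10 invr_gt0 ltr0n.
exists e => // d /andP[d0]; rewrite !lt_min => /andP[/andP[deta deta1] dk].
have [dd1 hs] := h1 d (introT andP (conj d0 deta1)).
apply: (chain (G := G) (s1 := s1)) => //.
- by move=> x Gx; exact: hS x Gx d d0 dk.
- apply: h0; apply/andP; split; lra.
Qed.
End Step3.



Section Red.
Context {R : realType}.

Lemma red_lemma (a b z : \bar R) :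
  (forall s t : R, (s%:E < a)%E -> (t%:E < b)%E -> ((s + t)%:E <= z)%E) ->
  (a + b <= z)%E.
Proof.
move=> h.
case: z h => [rz| |] h; last 2 first.
- by rewrite leey.
- have n1 : forall r : R, ((r - 1)%:E < r%:E)%E by move=> r; rewrite lte_fin; lra.
  case: a h => [ra| |] h; case: b h => [rb| |] h //=.
  + by have := h (ra - 1) (rb - 1) (n1 _) (n1 _).
  + by have := h (ra - 1) 0 (n1 _) (ltry _).
  + by have := h 0 (rb - 1) (ltry _) (n1 _).
  + by have := h 0 0 (ltry _) (ltry _).
case: a h => [ra| |] h; case: b h => [rb| |] h //=;
  try by rewrite ?addeNy ?addNye leNye.
- rewrite lee_fin leNgt; apply/negP => lt.
  have := h (ra - (ra + rb - rz) / 4) (rb - (ra + rb - rz) / 4).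
  rewrite !lte_fin lee_fin; lra.
- exfalso; have := h (ra - 1) (rz - ra + 2); rewrite !lte_fin ltry lee_fin; lra.
- exfalso; have := h (rz - rb + 2) (rb - 1); rewrite !lte_fin ltry lee_fin; lra.
- exfalso; have := h 1 rz; rewrite !ltry lee_fin; lra.
Qed.

Lemma between (s : R) (a : \bar R) : (s%:E < a)%E ->
  exists2 s1 : R, s < s1 & (s1%:E < a)%E.
Proof.
case: a => [ra| |] //= h.
- rewrite lte_fin in h.
  by exists ((s + ra) / 2); [lra | rewrite lte_fin; lra].
- by exists (s + 1); [lra | rewrite ltry].
Qed.
End Red.


Lemma pos_section (R : realType) (d1 d2 : measure_display) (X : measurableType d1)
  (Y : measurableType d2) (mu : {finite_measure set X -> \bar R})
  (nu : {finite_measure set Y -> \bar R}) (E : set (X * Y)) :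
  measurable E -> (0 < (mu \x nu) E)%E ->
  measurable [set x | (0 < nu (xsection E x))%E] /\
  (0 < mu [set x | (0 < nu (xsection E x))%E])%E.
Proof.
move=> mE hE.
pose phi := nu \o xsection E.
have mphi := measurable_fun_xsection nu mE.
have mA : measurable [set x | (0 < phi x)%E].
  have := measurable_lte (f := fun=> 0%E) measurableT (measurable_cst _) mphi.
  by rewrite setTI.
split => //.
rewrite lt0e measure_ge0 andbT; apply/negP => /eqP mA0.
move: hE; rewrite /product_measure1 /=.
rewrite -(setUv [set x | (0 < phi x)%E]).
rewrite ge0_integral_setU //; last 3 first.
- exact: measurableC.
- by rewrite setUv.
- by rewrite /disj_set setICr.
rewrite null_set_integral //; last exact: measurable_funS mphi.
rewrite integral0_eq ?adde0 ?ltxx //.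
move=> x /= hx; apply/eqP; rewrite eq_le measure_ge0 andbT.
by rewrite leNgt; apply/negP => h; apply: hx.
Qed.


Section Main.
Context (R : realType)
  (dX dY : measure_display) (X : measurableType dX) (Y : measurableType dY)
  (distX : X -> X -> R) (distY : Y -> Y -> R)
  (mu : {finite_measure set X -> \bar R}) (nu : {finite_measure set Y -> \bar R}).

Definition pdim (bd : set X -> \bar R) (A : set X) : \bar R :=
  ereal_inf [set ereal_sup (range (fun n => bd (F n)))
            | F in [set F : nat -> set X | A `<=` \bigcup_n F n]].

Definition Gs (F : nat -> set (X * Y)) (t : R) (n k : nat) : set X :=
  [set x | forall d, 0 < d -> d < (k.+1%:R)^-1 ->
     (t%:E < box_ratio distY (sec (F n) x) d)%E].

Definition Hs (F : nat -> set (X * Y)) (t : R) (m : nat) : set X :=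
  match unpickle m with Some (n, k) => Gs F t n k | None => Gs F t 0 0 end.

Lemma key_exists (bd : set X -> \bar R) (F : nat -> set (X * Y)) (E : set (X * Y))
  (s1 t : R) :
  (s1%:E < measure_dim (pdim bd) mu)%E ->
  (t%:E < measure_dim (lower_packing_dim distY) nu)%E ->
  measurable E -> (0 < (mu \x nu) E)%E -> E `<=` \bigcup_n F n ->
  exists n k, (s1%:E < bd (Gs F t n k))%E.
Proof.
move=> hs ht mE hE hF.
have [mA hA] := pos_section mE hE.
set A := [set x | (0 < nu (xsection E x))%E] in mA hA.
have cov : A `<=` \bigcup_m Hs F t m.
  move=> x Ax.
  have h1 : (measure_dim (lower_packing_dim distY) nu <=
             lower_packing_dim distY (xsection E x))%E.
    apply: inf_lb; exists (xsection E x) => //; split => //.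
    exact: measurable_xsection.
  have h2 : (lower_packing_dim distY (xsection E x) <=
             ereal_sup (range (fun n => lower_box_dim distY (sec (F n) x))))%E.
    apply: inf_lb; exists (fun n => sec (F n) x) => //.
    move=> y; rewrite /xsection /= inE => /hF[n _ Fn]; by exists n.
  have := lt_le_trans ht (le_trans h1 h2).
  move=> /ereal_sup_gt[_ [n _ <-] hn].
  have [eta eta0 heta] := einf_gt hn.
  pose k := Num.trunc (eta^-1).
  have hk : (k.+1%:R)^-1 < eta.
    rewrite -[X in _ < X]invrK ltf_pV2 ?posrE ?invr_gt0 ?ltr0n //.
    exact: truncnS_gt.
  exists (pickle (n, k)) => //.
  rewrite /Hs pickleK /= => d d0 dk.
  apply: heta; rewrite d0 /=; exact: lt_trans dk hk.
have h3 : (measure_dim (pdim bd) mu <= pdim bd A)%E.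
  by apply: inf_lb; exists A.
have h4 : (pdim bd A <= ereal_sup (range (fun m => bd (Hs F t m))))%E.
  by apply: inf_lb; exists (Hs F t).
have := lt_le_trans hs (le_trans h3 h4).
move=> /ereal_sup_gt[_ [m _ <-] hm].
move: hm; rewrite /Hs; case: (unpickle m) => [[n k]|] hm; by [exists n, k | exists 0%N, 0%N].
Qed.

End Main.

End Helpers.
Import Helpers.

Theorem theorem6p8 (R : realType)
  (dX dY : measure_display) (X : measurableType dX) (Y : measurableType dY)
  (distX : X -> X -> R) (distY : Y -> Y -> R)
  (hX : is_metric distX) (hY : is_metric distY)
  (hBX : @measurable _ X = metric_borel distX)
  (hBY : @measurable _ Y = metric_borel distY)
  (mu : {finite_measure set X -> \bar R}) (nu : {finite_measure set Y -> \bar R}) :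
  (measure_dim (packing_dim (max_dist distX distY)) (mu \x nu)
     >= measure_dim (packing_dim distX) mu
        + measure_dim (lower_packing_dim distY) nu)%E /\
  (measure_dim (lower_packing_dim (max_dist distX distY)) (mu \x nu)
     >= measure_dim (lower_packing_dim distX) mu
        + measure_dim (lower_packing_dim distY) nu)%E.
Proof.
have x0 : X := point.
split.
- apply: lb_inf => _ [E [mE hE] <-].
  apply: lb_inf => _ [F hF <-].
  apply: red_lemma => s t hs ht.
  have [s1 ss1 hs1] := between hs.
  have [n [k hk]] := key_exists (bd := upper_box_dim distX) hs1 ht mE hE hF.
  apply: le_trans (step3_up x0 hX ss1 hk _) _.
    by move=> x Gx; exact: Gx.
  by apply: sup_ub; exists n.
- apply: lb_inf => _ [E [mE hE] <-].
  apply: lb_inf => _ [F hF <-].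
  apply: red_lemma => s t hs ht.
  have [s1 ss1 hs1] := between hs.
  have [n [k hk]] := key_exists (bd := lower_box_dim distX) hs1 ht mE hE hF.
  apply: le_trans (step3_low x0 hX ss1 hk _) _.
    by move=> x Gx; exact: Gx.
  by apply: sup_ub; exists n.
Qed.
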